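(* Let the polynomials $\nu_r(x)$ be defined by $\nu_0 = 1$, $\nu_1 = 0$ and $\nu_r(x) = x \sum_{j=0}^{r-2} \binom{r-1}{j} \nu_j(x)$ for $r\ge2$. Then for every integer $m\ge1$ and every real $x \geq 0$, \[ \nu_{2m}(x) \leq m \max\left( e^{m-1} (mx)^m,\ m^{2m-1} x\right). \] *)

(* Defs.v *)
From Stdlib Require Import Reals Lra Lia Arith.
Open Scope R_scope.

(* nus n x k = nu_k(x) for all k <= n (values for k > n are irrelevant).
   Built by course-of-values recursion:
   nu_0 = 1, nu_1 = 0, nu_r = x * sum_{j=0}^{r-2} C(r-1,j) nu_j  (r >= 2). *)
Fixpoint nus (n : nat) (x : R) : nat -> R :=
  match n with
  | O => fun _ => 1
  | S n' =>
      let f := nus n' x in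
      fun k =>
        if (k <=? n')%nat then f k
        else match n' with
             | O => 0
             | S n'' => x * sum_f_R0 (fun j => C n' j * f j) n''
             end
  end.

Definition nu (r : nat) (x : R) : R := nus r x r.

Lemma nu_0 x : nu 0 x = 1.
Proof. reflexivity. Qed.
Lemma nu_1 x : nu 1 x = 0.
Proof. reflexivity. Qed.

(* Main.v *)
Require Import Defs.
From Stdlib Require Import Reals Lra Lia Arith.
Open Scope R_scope.

Lemma nus_stable x : forall n k, (k <= n)%nat -> nus n x k = nu k x.
Proof.
  induction n as [|n IH]; intros k Hk.
  - assert (k = 0%nat) by lia; subst; reflexivity.
  - destruct (Nat.eq_dec k (S n)) as [->|Hne]; [reflexivity|].
    assert (Hk' : (k <= n)%nat) by lia.
    simpl. replace (k <=? n)%nat with true by (symmetry; apply Nat.leb_le; lia).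
    apply IH; exact Hk'.
Qed.

Lemma nu_rec r x : nu (S (S r)) x = x * sum_f_R0 (fun j => C (S r) j * nu j x) r.
Proof.
  unfold nu at 1.
  assert (E : forall n k, nus (S n) x k = if (k <=? n)%nat then nus n x k else
     match n with O => 0 | S n'' => x * sum_f_R0 (fun j => C n j * nus n x j) n'' end)
    by reflexivity.
  rewrite E.
  replace (S (S r) <=? S r)%nat with false by (symmetry; apply Nat.leb_gt; lia).
  f_equal. apply sum_eq; intros i Hi. rewrite nus_stable by lia. reflexivity.
Qed.

Lemma sum_swap (f : nat -> nat -> R) N M :
  sum_f_R0 (fun i => sum_f_R0 (fun j => f i j) M) N =
  sum_f_R0 (fun j => sum_f_R0 (fun i => f i j) N) M.
Proof.
  induction N as [|N IH].
  - reflexivity.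
  - rewrite tech5, IH. rewrite <- plus_sum. apply sum_eq; intros; reflexivity.
Qed.

Definition d (n k : nat) : R :=
  if (2 * k <=? n)%nat then INR k ^ n / INR (fact k) else 0.

Definition F (K n : nat) (x : R) := sum_f_R0 (fun k => d n k * x ^ k) K.

Lemma d_nonneg n k : 0 <= d n k.
Proof.
  unfold d. destruct (2 * k <=? n)%nat; [|lra].
  apply Rmult_le_pos; [apply pow_le, pos_INR|].
  left; apply Rinv_0_lt_compat, INR_fact_lt_0.
Qed.

Lemma d_zero n k : (n < 2 * k)%nat -> d n k = 0.
Proof. intros H; unfold d. replace (2 * k <=? n)%nat with false by (symmetry; apply Nat.leb_gt; lia). reflexivity. Qed.

Lemma d_le n k : d n k <= INR k ^ n / INR (fact k).
Proof.
  unfold d. destruct (2 * k <=? n)%nat; [lra|].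
  apply Rmult_le_pos; [apply pow_le, pos_INR|].
  left; apply Rinv_0_lt_compat, INR_fact_lt_0.
Qed.

Lemma C_nonneg n k : 0 <= C n k.
Proof.
  unfold C. apply Rmult_le_pos; [left; apply INR_fact_lt_0|].
  left; apply Rinv_0_lt_compat, Rmult_lt_0_compat; apply INR_fact_lt_0.
Qed.

Lemma sum_zero_tail (f : nat -> R) K : (forall i, (1 <= i)%nat -> f i = 0) -> sum_f_R0 f K = f 0%nat.
Proof.
  intros H; induction K as [|K IH]; [reflexivity|]. rewrite tech5, IH, (H (S K)) by lia. lra.
Qed.

Lemma F_nonneg K n x : 0 <= x -> 0 <= F K n x.
Proof.
  intros Hx. apply cond_pos_sum; intros k. apply Rmult_le_pos; [apply d_nonneg|apply pow_le; exact Hx].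
Qed.

Lemma ck_bound r k :
  sum_f_R0 (fun j => C (S r) j * d j k) r <= d (S (S r)) (S k).
Proof.
  destruct (Nat.le_gt_cases (2 * S k) (S (S r))) as [Hle|Hgt].
  - unfold d at 2. replace (2 * S k <=? S (S r))%nat with true by (symmetry; apply Nat.leb_le; lia).
    apply Rle_trans with (sum_f_R0 (fun j => C (S r) j * INR k ^ j * 1 ^ (S r - j) / INR (fact k)) (S r)).
    + rewrite tech5.
      apply Rle_trans with (sum_f_R0 (fun j => C (S r) j * INR k ^ j * 1 ^ (S r - j) / INR (fact k)) r + 0).
      * rewrite Rplus_0_r. apply sum_Rle; intros j Hj. rewrite pow1, Rmult_1_r. unfold Rdiv.
        rewrite Rmult_assoc. apply Rmult_le_compat_l; [apply C_nonneg|]. apply d_le.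
      * apply Rplus_le_compat_l. rewrite pow1, Rmult_1_r. unfold Rdiv.
        apply Rmult_le_pos; [apply Rmult_le_pos; [apply C_nonneg|apply pow_le, pos_INR]|].
        left; apply Rinv_0_lt_compat, INR_fact_lt_0.
    + unfold Rdiv. rewrite <- (scal_sum (fun j => C (S r) j * INR k ^ j * 1 ^ (S r - j))).
      rewrite Rmult_comm. 
      replace (sum_f_R0 (fun j => C (S r) j * INR k ^ j * 1 ^ (S r - j)) (S r)) with ((INR k + 1) ^ (S r))
        by (rewrite binomial; reflexivity).
      rewrite fact_simpl, mult_INR. rewrite <- S_INR.
      assert (H0 : 0 < INR (S k)) by (apply lt_0_INR; lia).
      assert (H1 := INR_fact_lt_0 k).
      change (INR (S k) ^ S (S r)) with (INR (S k) * INR (S k) ^ S r).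
      right. field. lra.
  - apply Rle_trans with 0; [|apply d_nonneg].
    right. apply Rle_antisym.
    + apply Rle_trans with (sum_f_R0 (fun _ => 0) r).
      * apply sum_Rle; intros j Hj. rewrite d_zero by lia. lra.
      * rewrite sum_cte. lra.
    + apply cond_pos_sum; intros j. apply Rmult_le_pos; [apply C_nonneg|apply d_nonneg].
Qed.

Lemma main_bound x K : 0 <= x -> forall n, (n <= K)%nat -> nu n x <= F K n x.
Proof.
  intros Hx n. induction n as [n IH] using lt_wf_ind. intros HnK.
  destruct n as [|[|r]].
  - rewrite nu_0. unfold F. rewrite sum_zero_tail.
    + unfold d. simpl. lra.
    + intros i Hi. rewrite d_zero by lia. lra.
  - rewrite nu_1. apply F_nonneg; exact Hx.
  - rewrite nu_rec.
    apply Rle_trans with (x * sum_f_R0 (fun j => C (S r) j * F K j x) r).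
    { apply Rmult_le_compat_l; [exact Hx|]. apply sum_Rle; intros j Hj.
      apply Rmult_le_compat_l; [apply C_nonneg|]. apply IH; lia. }
    assert (Heq : x * sum_f_R0 (fun j => C (S r) j * F K j x) r =
       sum_f_R0 (fun k => sum_f_R0 (fun j => C (S r) j * d j k) r * x ^ S k) K).
    { rewrite scal_sum. unfold F.
      transitivity (sum_f_R0 (fun j => sum_f_R0 (fun k => C (S r) j * d j k * x ^ S k) K) r).
      - apply sum_eq; intros j _. rewrite (Rmult_comm _ x), <- Rmult_assoc, (Rmult_comm x), Rmult_assoc, scal_sum, scal_sum. apply sum_eq; intros k _. simpl. ring.
      - rewrite sum_swap. apply sum_eq; intros k _. rewrite <- scal_sum. rewrite Rmult_comm.
        reflexivity. }
    rewrite Heq. clear Heq.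
    destruct K as [|K']; [lia|].
    unfold F. rewrite (decomp_sum (fun k => d (S (S r)) k * x ^ k) (S K')) by lia. simpl Init.Nat.pred.
    rewrite (tech5 (fun k => sum_f_R0 (fun j => C (S r) j * d j k) r * x ^ S k) K').
    assert (Hz : sum_f_R0 (fun j => C (S r) j * d j (S K')) r = 0).
    { transitivity (sum_f_R0 (fun _ => 0) r); [|rewrite sum_cte; ring].
      apply sum_eq; intros j Hj. rewrite d_zero by lia. ring. }
    rewrite Hz. replace (d (S (S r)) 0) with 0 by (unfold d; simpl; field).
    rewrite Rmult_0_l, Rmult_0_l, Rplus_0_l, Rplus_0_r.
    apply sum_Rle; intros k Hk. apply Rmult_le_compat_r; [apply pow_le; exact Hx|].
    apply ck_bound.
Qed.

Lemma exp_INR n : exp (INR n) = exp 1 ^ n.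
Proof.
  induction n as [|n IH]; [simpl; apply exp_0|].
  rewrite S_INR, exp_plus, IH. simpl. ring.
Qed.

Lemma exp_mul_pow t n : exp t ^ n = exp (INR n * t).
Proof.
  induction n as [|n IH]; [simpl; rewrite Rmult_0_l, exp_0; reflexivity|].
  simpl pow. rewrite IH, <- exp_plus, S_INR. f_equal. ring.
Qed.

Lemma fact_bound k : INR (S k) ^ (S k) <= exp 1 ^ k * INR (fact (S k)).
Proof.
  induction k as [|k IH].
  - simpl. lra.
  - set (a := INR (S k)).
    assert (Ha : 0 < a) by (apply lt_0_INR; lia).
    assert (Hb : INR (S (S k)) = a * (1 + / a)) by (rewrite S_INR; fold a; field; lra).
    assert (He : (1 + / a) ^ (S k) <= exp 1).
    { apply Rle_trans with (exp (/ a) ^ S k).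
      - apply pow_incr. split.
        + assert (0 < / a) by (apply Rinv_0_lt_compat; lra). lra.
        + left. apply exp_ineq1. apply Rgt_not_eq, Rinv_0_lt_compat; lra.
      - rewrite exp_mul_pow. fold a. right. f_equal. field. lra. }
    change (INR (S (S k)) ^ S (S k)) with (INR (S (S k)) * INR (S (S k)) ^ S k).
    rewrite fact_simpl, mult_INR.
    rewrite Hb at 2. rewrite Rpow_mult_distr.
    assert (Hp : 0 <= (1 + / a) ^ S k) by (apply pow_le; assert (0 < / a) by (apply Rinv_0_lt_compat; lra); lra).
    assert (Hq : 0 <= a ^ S k) by (apply pow_le; lra).
    assert (Hr : 0 <= INR (S (S k))) by apply pos_INR.
    fold a in IH.
    simpl (exp 1 ^ S k).
    assert (He1 : 0 <= exp 1) by (left; apply exp_pos).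
    apply Rle_trans with (INR (S (S k)) * (a ^ S k * exp 1)).
    + apply Rmult_le_compat_l; [exact Hr|]. apply Rmult_le_compat_l; [exact Hq| exact He].
    + apply Rle_trans with (INR (S (S k)) * (exp 1 ^ k * INR (fact (S k)) * exp 1)).
      * apply Rmult_le_compat_l; [exact Hr|]. apply Rmult_le_compat_r; [exact He1|exact IH].
      * right. ring.
Qed.

Lemma key k' p :
  INR (S k') ^ (2 * (S k' + p)) / INR (fact (S k')) <=
  exp 1 ^ k' * INR (S k' + p) ^ (S k' + p + p).
Proof.
  replace (2 * (S k' + p))%nat with (S k' + (S k' + p + p))%nat by lia.
  rewrite pow_add.
  assert (Hf := INR_fact_lt_0 (S k')).
  assert (Hfb := fact_bound k').
  assert (H1 : INR (S k') ^ (S k' + p + p) <= INR (S k' + p) ^ (S k' + p + p)).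
  { apply pow_incr. split; [apply pos_INR|apply le_INR; lia]. }
  assert (H0 : 0 <= INR (S k') ^ (S k' + p + p)) by (apply pow_le, pos_INR).
  assert (H2 : INR (S k') ^ S k' / INR (fact (S k')) <= exp 1 ^ k').
  { apply (Rmult_le_reg_r (INR (fact (S k')))); [exact Hf|].
    unfold Rdiv. rewrite Rmult_assoc, Rinv_l by lra. lra. }
  assert (H3 : 0 <= exp 1 ^ k') by (apply pow_le; left; apply exp_pos).
  assert (H4 : 0 <= INR (S k') ^ S k' / INR (fact (S k'))).
  { unfold Rdiv. apply Rmult_le_pos; [apply pow_le, pos_INR|left; apply Rinv_0_lt_compat; exact Hf]. }
  apply Rle_trans with (INR (S k') ^ S k' / INR (fact (S k')) * INR (S k') ^ (S k' + p + p)).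
  - right. unfold Rdiv. ring.
  - apply Rmult_le_compat; assumption.
Qed.

Lemma term_bound m k x : (1 <= k <= m)%nat -> 0 <= x ->
  d (2 * m) k * x ^ k <=
  Rmax (exp (INR m - 1) * (INR m * x) ^ m) (INR m ^ (2 * m - 1) * x).
Proof.
  intros Hk Hx.
  destruct k as [|k']; [lia|].
  assert (Hex : exists p, m = (S k' + p)%nat) by (exists (m - S k')%nat; lia).
  destruct Hex as [p ->].
  unfold d. replace (2 * S k' <=? 2 * (S k' + p))%nat with true by (symmetry; apply Nat.leb_le; lia).
  assert (HK := key k' p).
  set (T := INR (S k') ^ (2 * (S k' + p)) / INR (fact (S k'))) in *.
  set (mm := INR (S k' + p)) in *.
  set (E := exp 1) in *.
  assert (HT0 : 0 <= T).
  { unfold T, Rdiv. apply Rmult_le_pos; [apply pow_le, pos_INR|left; apply Rinv_0_lt_compat, INR_fact_lt_0]. }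
  assert (HE : 0 < E) by apply exp_pos.
  assert (Hmm : 0 <= mm) by apply pos_INR.
  assert (Hxk : 0 <= x ^ S k') by (apply pow_le; exact Hx).
  assert (Hexp : exp (mm - 1) = E ^ (k' + p)).
  { unfold E. rewrite <- exp_INR. f_equal. unfold mm. rewrite plus_INR, S_INR, plus_INR. ring. }
  rewrite Hexp.
  assert (HTx : T * x ^ S k' <= E ^ k' * mm ^ (S k' + p + p) * x ^ S k')
    by (apply Rmult_le_compat_r; assumption).
  destruct (Rle_lt_dec (x * E) mm) as [Hc|Hc].
  - apply Rle_trans with (mm ^ (2 * (S k' + p) - 1) * x); [|apply Rmax_r].
    replace (2 * (S k' + p) - 1)%nat with (S k' + p + p + k')%nat by lia.
    rewrite pow_add.
    assert (Hp : (x * E) ^ k' <= mm ^ k') by (apply pow_incr; split; [apply Rmult_le_pos; lra|exact Hc]).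
    rewrite Rpow_mult_distr in Hp.
    apply Rle_trans with (1 := HTx).
    change (x ^ S k') with (x * x ^ k').
    assert (H0 : 0 <= mm ^ (S k' + p + p)) by (apply pow_le; exact Hmm).
    apply Rle_trans with (mm ^ (S k' + p + p) * x * (x ^ k' * E ^ k')); [right; ring|].
    apply Rle_trans with (mm ^ (S k' + p + p) * x * mm ^ k'); [|right; ring].
    apply Rmult_le_compat_l; [apply Rmult_le_pos; assumption|exact Hp].
  - apply Rle_trans with (E ^ (k' + p) * (mm * x) ^ (S k' + p)); [|apply Rmax_l].
    assert (Hp : mm ^ p <= (x * E) ^ p) by (apply pow_incr; split; [exact Hmm|lra]).
    rewrite Rpow_mult_distr in Hp.
    apply Rle_trans with (1 := HTx).
    rewrite Rpow_mult_distr, !pow_add.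
    assert (H0 : 0 <= E ^ k' * mm ^ S k' * mm ^ p * x ^ S k') by
      (repeat apply Rmult_le_pos; try apply pow_le; lra).
    apply Rle_trans with (E ^ k' * mm ^ S k' * mm ^ p * x ^ S k' * mm ^ p); [right; ring|].
    apply Rle_trans with (E ^ k' * mm ^ S k' * mm ^ p * x ^ S k' * (x ^ p * E ^ p)).
    + apply Rmult_le_compat_l; [exact H0|exact Hp].
    + right. ring.
Qed.

Lemma sum_bound (t : nat -> R) M m N : 0 <= M ->
  (forall k, (1 <= k <= m)%nat -> t k <= M) ->
  (forall k, (k = 0 \/ m < k)%nat -> t k <= 0) ->
  sum_f_R0 t N <= INR (Nat.min N m) * M.
Proof.
  intros HM H1 H2. induction N as [|N IH].
  - simpl. rewrite Rmult_0_l. apply H2; lia.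
  - rewrite tech5. destruct (Nat.le_gt_cases (S N) m).
    + replace (Nat.min (S N) m) with (S (Nat.min N m)) by lia.
      rewrite S_INR. assert (t (S N) <= M) by (apply H1; lia). lra.
    + replace (Nat.min (S N) m) with (Nat.min N m) by lia.
      assert (t (S N) <= 0) by (apply H2; lia). lra.
Qed.

Theorem proposition20 (m : nat) (x : R) :
  (1 <= m)%nat -> 0 <= x ->
  nu (2 * m) x <=
  INR m * Rmax (exp (INR m - 1) * (INR m * x) ^ m) (INR m ^ (2 * m - 1) * x).
Proof.
  intros Hm Hx.
  apply Rle_trans with (F (2 * m) (2 * m) x); [apply main_bound; auto|].
  unfold F.
  replace (INR m) with (INR (Nat.min (2 * m) m)) at 1 by (f_equal; lia).
  apply sum_bound.
  - apply Rle_trans with (INR m ^ (2 * m - 1) * x); [|apply Rmax_r].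
    apply Rmult_le_pos; [apply pow_le, pos_INR|exact Hx].
  - intros k Hk. apply term_bound; assumption.
  - intros k [->|Hk].
    + replace (d (2 * m) 0) with 0.
      * simpl. lra.
      * unfold d. replace (2 * m)%nat with (S (2 * m - 1)) by lia. simpl. field.
    + rewrite d_zero by lia. lra.
Qed.
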